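(* Let $M$ be a finite-dimensional left $\mathsf{VBr}_{r,t}(\omega)$-module, $\mathbf a\in\mathrm{Seq}_{r,t}$, $\mathbf i\in\mathbb C^{r+t}$ and $k\in\{1,\dots,r+t-1\}$. Suppose that either (a) $a_k=a_{k+1}$, $\mathrm i_{k+1}\notin\{\mathrm i_k,\mathrm i_k+1,\mathrm i_k-1\}$ and $(y_k-\mathrm i_{k+1})1_{\mathbf a}M_{\mathsf s_k\mathbf i}=0$; or (b) $a_k\ne a_{k+1}$, $\mathrm i_k+\mathrm i_{k+1}\ne0$ and $(y_k-\mathrm i_{k+1})1_{\mathsf s_k\mathbf a}M_{\mathsf s_k\mathbf i}=0$. Then $(y_{k+1}-\mathrm i_{k+1})1_{\mathbf a}M_{\mathbf i}=0$.
   Context: $\mathrm{Seq}_{r,t}$: sequences $\mathbf a\in\{\wedge,\vee\}^{r+t}$ with exactly $r$ entries $\wedge$; $J=\{1,\dots,r+t-1\}$; $\mathsf s_k$ swaps entries $k,k+1$ (of sequences and of vectors in $\mathbb C^{r+t}$). $\mathrm{Br}_{r,t}(\gamma)$: basis oriented Brauer diagrams $\mathbf a\to\mathbf b$ (perfect matchings between bottom row labelled $\mathbf a$ and top row labelled $\mathbf b$; bottom-to-top strands join equal labels, strands within a row join different labels), product by stacking (second factor below), $0$ if labels mismatch, loops replaced by $\gamma$. $1_{\mathbf a}$ identity; for $k\in J$: if $a_k=a_{k+1}$, $s_k1_{\mathbf a}$ crosses strands $k,k+1$ ($\mathbf a\to\mathbf a$); if $a_k\neq a_{k+1}$, $\hat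 s_k1_{\mathbf a}$ crossing $\mathbf a\to\mathsf s_k\mathbf a$, $e_k1_{\mathbf a}$ cap at bottom $k,k+1$ and cup at top $k,k+1$ ($\mathbf a\to\mathbf a$), $\hat e_k1_{\mathbf a}$ same shape $\mathbf a\to\mathsf s_k\mathbf a$; these are $0$ when the condition fails; $s_k=\sum_{\mathbf a}s_k1_{\mathbf a}$ etc. For $\omega=(\omega_j)_{j\ge0}\subset\mathbb C$, $\mathsf{VBr}_{r,t}(\omega)$ is the quotient of the free product $\mathrm{Br}_{r,t}(\omega_0)*\mathbb C[y_1,\dots,y_{r+t}]$ by: $y_i$ commutes with all $1_{\mathbf a}$, and with $s_k,\hat s_k,e_k,\hat e_k$ when $i\notin\{k,k+1\}$; $e_1y_1^je_11_{\mathbf a}=\omega_je_11_{\mathbf a}$ for $j\ge0$ and $(a_1,a_2)=(\wedge,\vee)$; for $a_k=a_{k+1}$: $s_ky_k1_{\mathbf a}-y_{k+1}s_k1_{\mathbf a}=-1_{\mathbf a}$, $s_ky_{k+1}1_{\mathbf a}-y_ks_k1_{\mathbf a}=1_{\mathbf a}$; $\hat s_ky_k-y_{k+1}\hat s_k=\hat e_k$, $\hat s_ky_{k+1}-y_k\hat s_k=-\hat e_k$; $e_k,\hat e_k$ are annihilated on both sides by $y_k+y_{k+1}$. $1_{\mathbf a}M_{\mathbf i}=\{v\in1_{\mathbf a}M:(y_k-\mathrm i_k)^Nv=0\ \forall k,\ N\gg0\}$ (generalized simultaneous eigenspace). *)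

(* Defs.v *)
From HB Require Import structures.
From mathcomp Require Import all_boot all_order all_algebra all_fingroup.
From mathcomp Require Import complex Rstruct.
Set Implicit Arguments.
Unset Strict Implicit.
Unset Printing Implicit Defensive.
Import GRing.Theory.
Local Open Scope ring_scope.

Definition C := complex Rdefinitions.R.

(* Oriented Brauer diagrams on n = r + t points per row.              *)
(* Labels: true = wedge (^), false = vee (v).                         *)
(* Points: (false, i) = i-th point of the bottom row,                 *)
(*         (true, i)  = i-th point of the top row (0-based).          *)
Definition rawdiag (n : nat) :=
  (n.-tuple bool * n.-tuple bool * {ffun bool * 'I_n -> bool * 'I_n})%type.

Definition dbot n (d : rawdiag n) := d.1.1.
Definition dtop n (d : rawdiag n) := d.1.2.
Definition dmatch n (d : rawdiag n) := d.2.

Definition plabel n (d : rawdiag n) (x : bool * 'I_n) : bool :=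
  if x.1 then tnth (dtop d) x.2 else tnth (dbot d) x.2.

(* A basis diagram  a -> b  of Br_{r,t}: a perfect matching (fixed-point-free
   involution) of the 2n points, with a, b in Seq_{r,t}; strands joining
   the two rows join equal labels, strands within a row join different labels. *)
Definition valid_diag (r t : nat) (d : rawdiag (r + t)) : bool :=
  [&& count id (dbot d) == r, count id (dtop d) == r &
   [forall x, [&& dmatch d (dmatch d x) == x, dmatch d x != x &
      if (dmatch d x).1 == x.1 then plabel d (dmatch d x) != plabel d x
      else plabel d (dmatch d x) == plabel d x]]].

Definition diag (r t : nat) := {d : rawdiag (r + t) | valid_diag d}.

(* Stacking: d1 on top of d2 (the product d1 * d2, second factor below).
   Combined picture has three rows of n points: level 0 = bottom of d2,
   level 1 = top of d2 = bottom of d1, level 2 = top of d1. *)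
Section Compose.
Variables (n : nat) (d1 d2 : rawdiag n).

Definition cpt := ('I_3 * 'I_n)%type.
Definition lvl0 : 'I_3 := ord0.
Definition lvl1 : 'I_3 := inord 1.
Definition lvl2 : 'I_3 := ord_max.

Definition lift_low (x : bool * 'I_n) : cpt := (if x.1 then lvl1 else lvl0, x.2).
Definition lift_up (x : bool * 'I_n) : cpt := (if x.1 then lvl2 else lvl1, x.2).

Definition cedge : rel cpt := fun u v =>
  (((u.1 == lvl0) || (u.1 == lvl1)) &&
     (v == lift_low (dmatch d2 (u.1 == lvl1, u.2))))
  || (((u.1 == lvl1) || (u.1 == lvl2)) &&
     (v == lift_up (dmatch d1 (u.1 == lvl2, u.2)))).

Definition outer (x : bool * 'I_n) : cpt := (if x.1 then lvl2 else lvl0, x.2).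

Definition comp_match (x : bool * 'I_n) : bool * 'I_n :=
  odflt x [pick y | (y != x) && connect cedge (outer x) (outer y)].

Definition comp_raw : rawdiag n := (dbot d2, dtop d1, [ffun x => comp_match x]).

(* number of closed loops: connected components of the stacked picture
   consisting of middle points only (counted by their least middle point) *)
Definition nloops : nat :=
  #|[set m : 'I_n |
      [forall x : bool * 'I_n, ~~ connect cedge (lvl1, m) (outer x)] &&
      [forall m' : 'I_n, (m' < m)%N ==> ~~ connect cedge (lvl1, m) (lvl1, m')]]|.
End Compose.

(* A representation on M = C^m (column vectors) is given by matrices.
   The action of a raw diagram: the action of the corresponding basis
   element if it is a valid diagram, and 0 otherwise. *)
Definition act (r t m : nat) (rho : diag r t -> 'M[C]_m) (d : rawdiag (r + t)) :
  'M[C]_m := if insub d is Some d' then rho d' else 0.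

Section Generators.
Variable n : nat.

(* position k+1 (0-based), as an element of 'I_n (meaningful when k.+1 < n) *)
Definition succo (k : 'I_n) : 'I_n := insubd k k.+1.
Definition swp (k : 'I_n) : {perm 'I_n} := tperm k (succo k).

Definition sk_seq (k : 'I_n) (a : n.-tuple bool) : n.-tuple bool :=
  [tuple tnth a (swp k j) | j < n].
Definition sk_vec (k : 'I_n) (i : 'I_n -> C) : 'I_n -> C := fun j => i (swp k j).

Definition id_raw (a : n.-tuple bool) : rawdiag n :=
  (a, a, [ffun x : bool * 'I_n => (~~ x.1, x.2)]).
Definition cross_raw (k : 'I_n) (a : n.-tuple bool) : rawdiag n :=
  (a, sk_seq k a, [ffun x : bool * 'I_n => (~~ x.1, swp k x.2)]).
(* cap at bottom k,k+1, cup at top k,k+1, vertical strands elsewhere;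
   labels a -> b  (b = a for e_k, b = s_k a for \hat e_k) *)
Definition capcup_raw (k : 'I_n) (a b : n.-tuple bool) : rawdiag n :=
  (a, b, [ffun x : bool * 'I_n =>
            if x.2 == k then (x.1, succo k)
            else if x.2 == succo k then (x.1, k)
            else (~~ x.1, x.2)]).
End Generators.

Section Action.
Variables (r t m : nat) (rho : diag r t -> 'M[C]_m).
Local Notation n := (r + t).

Definition one (a : n.-tuple bool) := act rho (id_raw a).
Definition s_a (k : 'I_n) (a : n.-tuple bool) :=
  if tnth a k == tnth a (succo k) then act rho (cross_raw k a) else 0.
Definition sh_a (k : 'I_n) (a : n.-tuple bool) :=
  if tnth a k != tnth a (succo k) then act rho (cross_raw k a) else 0.
Definition e_a (k : 'I_n) (a : n.-tuple bool) :=
  if tnth a k != tnth a (succo k) then act rho (capcup_raw k a a) else 0.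
Definition eh_a (k : 'I_n) (a : n.-tuple bool) :=
  if tnth a k != tnth a (succo k) then act rho (capcup_raw k a (sk_seq k a)) else 0.

Definition s_ (k : 'I_n) := \sum_(a : n.-tuple bool) s_a k a.
Definition sh_ (k : 'I_n) := \sum_(a : n.-tuple bool) sh_a k a.
Definition e_ (k : 'I_n) := \sum_(a : n.-tuple bool) e_a k a.
Definition eh_ (k : 'I_n) := \sum_(a : n.-tuple bool) eh_a k a.
End Action.

Definition is_Br_module (r t m : nat) (gamma : C) (rho : diag r t -> 'M[C]_m) : Prop :=
  (forall d1 d2 : diag r t,
     rho d1 *m rho d2 =
     if dbot (val d1) == dtop (val d2)
     then gamma ^+ nloops (val d1) (val d2) *: act rho (comp_raw (val d1) (val d2))
     else 0)
  /\ \sum_(a : (r + t).-tuple bool) one rho a = 1%:M.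

(* Left VBr_{r,t}(omega)-module structure on C^m: a Br_{r,t}(omega_0)-module
   structure rho together with an action y of C[y_1,...,y_{r+t}] (pairwise
   commuting matrices) satisfying the defining relations of VBr_{r,t}(omega).
   Indices are 0-based: y k corresponds to y_{k+1} of the paper. *)
Definition is_VBr_module (r t m : nat) (omega : nat -> C)
    (rho : diag r t -> 'M[C]_m) (y : 'I_(r + t) -> 'M[C]_m) : Prop :=
  is_Br_module (omega 0%N) rho /\
  (forall i j, y i *m y j = y j *m y i) /\
  (forall i a, y i *m one rho a = one rho a *m y i) /\
      (forall (i k : 'I_(r + t)), (k.+1 < r + t)%N -> i != k -> i != succo k ->
         [/\ y i *m s_ rho k = s_ rho k *m y i,
             y i *m sh_ rho k = sh_ rho k *m y i,
             y i *m e_ rho k = e_ rho k *m y i &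
             y i *m eh_ rho k = eh_ rho k *m y i]) /\
      (forall (k0 : 'I_(r + t)) (j : nat) (a : (r + t).-tuple bool),
         val k0 = 0%N -> (1 < r + t)%N ->
         tnth a k0 = true -> tnth a (succo k0) = false ->
         e_ rho k0 *m (y k0 ^+ j) *m e_ rho k0 *m one rho a =
         omega j *: (e_ rho k0 *m one rho a)) /\
      (forall (k : 'I_(r + t)), (k.+1 < r + t)%N ->
         [/\ (forall a : (r + t).-tuple bool, tnth a k = tnth a (succo k) ->
                s_ rho k *m y k *m one rho a - y (succo k) *m s_ rho k *m one rho a
                  = - one rho a
                /\ s_ rho k *m y (succo k) *m one rho a - y k *m s_ rho k *m one rho a
                  = one rho a),
             sh_ rho k *m y k - y (succo k) *m sh_ rho k = eh_ rho k,
             sh_ rho k *m y (succo k) - y k *m sh_ rho k = - eh_ rho k,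
             ((y k + y (succo k)) *m e_ rho k = 0 /\ e_ rho k *m (y k + y (succo k)) = 0) &
             ((y k + y (succo k)) *m eh_ rho k = 0 /\ eh_ rho k *m (y k + y (succo k)) = 0)]).

(* v lies in 1_a M_i : v in the image of 1_a, and v is a generalized
   simultaneous eigenvector of the y_k with eigenvalues i_k. *)
Definition in_aMi (r t m : nat) (rho : diag r t -> 'M[C]_m) (y : 'I_(r + t) -> 'M[C]_m)
    (a : (r + t).-tuple bool) (i : 'I_(r + t) -> C) (v : 'cV[C]_m) : Prop :=
  (exists w : 'cV[C]_m, v = one rho a *m w) /\
  (forall k : 'I_(r + t), exists N : nat, (y k - (i k)%:M) ^+ N *m v = 0).

(* Main.v *)
From Pilot Require Import Defs.
From HB Require Import structures.
From mathcomp Require Import all_boot all_order all_algebra all_fingroup.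
From mathcomp Require Import complex Rstruct.
From mathcomp Require Import ring.
Import GRing.Theory.
Import Pilot.Defs.
Local Open Scope ring_scope.

Lemma lvl1v : nat_of_ord lvl1 = 1%N. Proof. by rewrite /lvl1 inordK. Qed.
Lemma lvl01 : (lvl0 == lvl1) = false. Proof. by rewrite -val_eqE /= lvl1v. Qed.
Lemma lvl10 : (lvl1 == lvl0) = false. Proof. by rewrite -val_eqE /= lvl1v. Qed.
Lemma lvl12 : (lvl1 == lvl2) = false. Proof. by rewrite -val_eqE /= lvl1v. Qed.
Lemma lvl21 : (lvl2 == lvl1) = false. Proof. by rewrite -val_eqE /= lvl1v. Qed.
Lemma lvl02 : (lvl0 == lvl2) = false. Proof. by rewrite -val_eqE. Qed.
Lemma lvl20 : (lvl2 == lvl0) = false. Proof. by rewrite -val_eqE. Qed.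
Lemma lvl_cases (l : 'I_3) : [\/ l = lvl0, l = lvl1 | l = lvl2].
Proof.
case: l => [[|[|[|l]]] Hl].
- by apply: Or31; apply/val_inj.
- by apply: Or32; apply/val_inj; rewrite /= lvl1v.
- by apply: Or33; apply/val_inj.
- by [].
Qed.
Definition lvlE := (lvl01, lvl10, lvl12, lvl21, lvl02, lvl20, eqxx).

Section Diag.
Variable n : nat.
Implicit Types (k : 'I_n) (a b : n.-tuple bool).

Lemma swpK k j : swp k (swp k j) = j.
Proof. by rewrite /swp tpermK. Qed.

Lemma skK k a : sk_seq k (sk_seq k a) = a.
Proof. by apply: eq_from_tnth => j; rewrite !tnth_mktuple swpK. Qed.

Lemma sk_count k a : count id (sk_seq k a) = count id a.
Proof. have H : perm_eq (sk_seq k a) a by apply/tuple_permP; exists (swp k). exact: (seq.permP H id). Qed.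

Lemma dmatch_cross k a x : dmatch (cross_raw k a) x = (~~ x.1, swp k x.2).
Proof. by rewrite /dmatch /cross_raw /= ffunE. Qed.

Variables (k : 'I_n) (a b : n.-tuple bool).
Local Notation d1 := (cross_raw k b).
Local Notation d2 := (cross_raw k a).

Definition Sj (j : 'I_n) : {pred cpt n} :=
  [pred u : cpt n | if u.1 == lvl1 then u.2 == swp k j else u.2 == j].

Lemma cedgeE (u v : cpt n) : cedge d1 d2 u v ->
  [\/ u.1 = lvl0 /\ v = (lvl1, swp k u.2),
      u.1 = lvl1 /\ v = (lvl0, swp k u.2),
      u.1 = lvl1 /\ v = (lvl2, swp k u.2) |
      u.1 = lvl2 /\ v = (lvl1, swp k u.2)].
Proof.
case: u => l p; rewrite /cedge !dmatch_cross /= /lift_low /lift_up /=.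
case: (lvl_cases l) => ->; rewrite !lvlE /= ?orbF.
- by move/eqP->; apply: Or41; split.
- by case/orP=> /eqP->; [apply: Or42|apply: Or43]; split.
- by move/eqP->; apply: Or44; split.
Qed.

Lemma Sj_closed j : closed (cedge d1 d2) (Sj j).
Proof.
move=> u v /cedgeE; rewrite !inE.
have sw : forall p q, (swp k p == swp k q) = (p == q).
  by move=> p q; apply/eqP/eqP => [/(congr1 (swp k))|->]; rewrite ?swpK.
case=> [][-> ->]; by rewrite /= !lvlE ?sw // -sw swpK.
Qed.

Lemma cedge01 j : cedge d1 d2 (lvl0, j) (lvl1, swp k j).
Proof. by rewrite /cedge !dmatch_cross /= /lift_low /= !lvlE. Qed.
Lemma cedge12 j : cedge d1 d2 (lvl1, j) (lvl2, swp k j).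
Proof. by rewrite /cedge !dmatch_cross /= /lift_low /lift_up /= !lvlE /= ?orbT. Qed.
Lemma cedge10 j : cedge d1 d2 (lvl1, j) (lvl0, swp k j).
Proof. by rewrite /cedge !dmatch_cross /= /lift_low /lift_up /= !lvlE. Qed.
Lemma cedge21 j : cedge d1 d2 (lvl2, j) (lvl1, swp k j).
Proof. by rewrite /cedge !dmatch_cross /= /lift_low /lift_up /= !lvlE. Qed.

Lemma comp_match_cross x : comp_match d1 d2 x = (~~ x.1, x.2).
Proof.
case: x => x1 x2.
rewrite /comp_match; case: pickP => [y /andP[ny c] | none] /=.
  have := closed_connect (Sj_closed x2) c.
  have ox : (outer (x1, x2) \in Sj x2).
    by rewrite inE /outer; case: (x1); rewrite /= !lvlE.
  rewrite ox inE /outer; case: y ny c => [y1 y2] /=.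
  move: ox; case: x1; case: y1; rewrite /= !lvlE /= => _ ny _ /esym/eqP ey; rewrite ey ?eqxx // in ny *.

have := none (~~ x1, x2); rewrite /=.
have -> : ((~~ x1, x2) != (x1, x2)) by rewrite xpair_eqE; case: (x1).
rewrite /outer /=; move=> {none}; case: x1 => /=.
  move/negbT/negP; case; apply: connect_trans (connect1 (cedge21 _)) _.
  by rewrite -{2}(swpK k x2); apply: connect1; apply: cedge10.
move/negbT/negP; case; apply: connect_trans (connect1 (cedge01 _)) _.
by rewrite -{2}(swpK k x2); apply: connect1; apply: cedge12.
Qed.

Lemma nloops_cross : nloops d1 d2 = 0%N.
Proof.
apply/eqP; rewrite cards_eq0; apply/eqP/setP => m; rewrite !inE.
apply/negbTE; rewrite negb_and; apply/orP; left.
rewrite negb_forall; apply/existsP; exists (true, swp k m).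
by rewrite negbK /outer /=; apply: connect1; apply: cedge12.
Qed.

End Diag.

Lemma cross_valid r t (k : 'I_(r + t)) (a : (r + t).-tuple bool) :
  count id a = r -> valid_diag (cross_raw k a).
Proof.
move=> ca; rewrite /valid_diag /dbot /dtop /= sk_count ca eqxx /=.
apply/forallP => -[x1 x2]; rewrite !(@dmatch_cross _ k a) /= (@swpK _ k x2) negbK eqxx /=.
rewrite /plabel /dtop /dbot /=.
case: x1 => /=; rewrite ?tnth_mktuple ?swpK eqxx //.
Qed.

Section Act.
Variables (r t m : nat) (gamma : C) (rho : diag r t -> 'M[C]_m).
Hypothesis Hbr : is_Br_module gamma rho.
Local Notation n := (r + t).

Lemma act_orth (d1 d2 : rawdiag n) : dbot d1 != dtop d2 ->
  act rho d1 *m act rho d2 = 0.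
Proof.
move=> H; rewrite /act; case: insubP => [d1' _ e1|_]; last by rewrite mul0mx.
case: insubP => [d2' _ e2|_]; last by rewrite mulmx0.
by rewrite Hbr.1 e1 e2 (negbTE H).
Qed.

Lemma act_cross_cross (k : 'I_n) (a : n.-tuple bool) : count id a = r ->
  act rho (cross_raw k (sk_seq k a)) *m act rho (cross_raw k a) = one rho a.
Proof.
move=> ca.
have ca' : count id (sk_seq k a) = r by rewrite sk_count.
rewrite /act (insubT _ (@cross_valid r t k _ ca)) (insubT _ (@cross_valid r t k _ ca')).
rewrite Hbr.1 /= /dbot /dtop /= eqxx nloops_cross expr0 scale1r /one.
congr (act rho _); rewrite /comp_raw /id_raw /dbot /dtop /= skK.
by congr (_, _, _); apply/ffunP => x; rewrite !ffunE comp_match_cross.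
Qed.

End Act.

Lemma tnth_sk n (k : 'I_n) (a : n.-tuple bool) j : tnth (sk_seq k a) j = tnth a (swp k j).
Proof. by rewrite tnth_mktuple. Qed.

Lemma sk_fix n (k : 'I_n) (a : n.-tuple bool) :
  tnth a k = tnth a (succo k) -> sk_seq k a = a.
Proof.
move=> e; apply: eq_from_tnth => j; rewrite tnth_sk /swp.
by case: tpermP => [->|->|].
Qed.

Lemma sk_k n (k : 'I_n) (a : n.-tuple bool) :
  (tnth (sk_seq k a) k = tnth a (succo k)) /\ (tnth (sk_seq k a) (succo k) = tnth a k).
Proof. by rewrite !tnth_sk /swp tpermL tpermR. Qed.

Set Implicit Arguments.
Unset Strict Implicit.

Section Mod.
Variables (r t m : nat) (omega : nat -> C) (rho : diag r t -> 'M[C]_m)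
  (y : 'I_(r + t) -> 'M[C]_m).
Hypothesis HV : is_VBr_module omega rho y.
Local Notation n := (r + t).
Let Hbr := HV.1.

Definition ifact (F : pred (n.-tuple bool)) (k : 'I_n) (b : n.-tuple bool) : 'M[C]_m :=
  if F b then act rho (cross_raw k b) else 0.
Definition Gs F k := \sum_(b : n.-tuple bool) ifact F k b.

Lemma ifact_one F k b a : b != a -> ifact F k b *m one rho a = 0.
Proof. by rewrite /ifact => ne; case: ifP => _; [apply: (@act_orth _ _ _ _ _ Hbr)|rewrite mul0mx]. Qed.

Lemma one_ifact F k c a : c != sk_seq k a -> one rho c *m ifact F k a = 0.
Proof. by rewrite /ifact => ne; case: ifP => _; [apply: (@act_orth _ _ _ _ _ Hbr)|rewrite mulmx0]. Qed.

Lemma ifact_ifact F k e a : e != sk_seq k a -> ifact F k e *m ifact F k a = 0.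
Proof.
rewrite /ifact => ne; case: ifP => _; last by rewrite mul0mx.
by case: ifP => _; [apply: (@act_orth _ _ _ _ _ Hbr)|rewrite mulmx0].
Qed.

Lemma G_one F k a : Gs F k *m one rho a = ifact F k a *m one rho a.
Proof.
rewrite /Gs mulmx_suml (bigD1 a) //= big1 ?addr0 // => b /ifact_one; apply.
Qed.

Lemma one_P (M : 'M[C]_m) b : (forall c, c != b -> one rho c *m M = 0) ->
  one rho b *m M = M.
Proof.
move=> H; rewrite -{2}[M]mul1mx -Hbr.2 mulmx_suml (bigD1 b) //= big1 ?addr0 //.
Qed.

Lemma oneK a : one rho a *m one rho a = one rho a.
Proof. by apply: one_P => c ne; apply: (@act_orth _ _ _ _ _ Hbr). Qed.

Lemma one_G F k a : one rho (sk_seq k a) *m (Gs F k *m one rho a) = Gs F k *m one rho a.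
Proof. by apply: one_P => c ne; rewrite G_one mulmxA one_ifact // mul0mx. Qed.

Lemma GG (F : pred (n.-tuple bool)) k a : F a -> F (sk_seq k a) -> count id a = r ->
  Gs F k *m (Gs F k *m one rho a) = one rho a.
Proof.
move=> Fa Fsa ca; rewrite G_one !mulmxA /Gs mulmx_suml (bigD1 (sk_seq k a)) //=.
rewrite big1 ?addr0; last by move=> e /ifact_ifact ->.
by rewrite /ifact Fa Fsa (@act_cross_cross _ _ _ _ _ Hbr _ _ ca) oneK.
Qed.

End Mod.

Section Lin.
Variables (R : fieldType) (m : nat).
Implicit Types (A B Z W : 'M[R]_m) (u : 'cV[R]_m).

Lemma mulvA A B u : (A * B) *m u = A *m (B *m u).
Proof. by rewrite -mulmxE mulmxA. Qed.

Lemma L_pow A B W (c : R) N : W * A = B * W ->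
  (B - c%:M) ^+ N * W = W * (A - c%:M) ^+ N.
Proof.
move=> H.
have H1 : (B - c%:M) * W = W * (A - c%:M).
  by rewrite mulrBl mulrBr H -!mulmxE scalar_mxC.
elim: N => [|N IH]; first by rewrite !expr0 mul1r mulr1.
by rewrite exprS -mulrA IH mulrA H1 -mulrA -exprS.
Qed.

Lemma mulmxMnl A u N : (A *+ N) *m u = (A *m u) *+ N.
Proof. by elim: N => [|N IH]; rewrite ?mul0mx // !mulrS mulmxDl IH. Qed.

Lemma comm_pow {A B} N : A * B = B * A -> A ^+ N * B = B * A ^+ N.
Proof.
move=> H; elim: N => [|N IH]; first by rewrite !expr0 mul1r mulr1.
by rewrite exprS -mulrA IH mulrA H -mulrA.
Qed.

Lemma L_nil A B N1 N2 u : A * B = B * A ->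
  A ^+ N1 *m u = 0 -> B ^+ N2 *m u = 0 -> (A + B) ^+ (N1 + N2) *m u = 0.
Proof.
move=> cAB HA HB; rewrite exprDn_comm //.
rewrite mulmx_suml big1 // => i _.
rewrite mulmxMnl.
case: (leqP N2 i) => hi.
  by rewrite -(subnK hi) exprD mulrA mulvA HB mulmx0 mul0rn.
have hj : (N1 <= N1 + N2 - i)%N by rewrite -addnBA ?leq_addr // ltnW.
have c1 : A * B ^+ i = B ^+ i * A by rewrite (comm_pow i (esym cAB)).
rewrite -(subnK hj) exprD -mulrA mulvA (comm_pow N1 c1).
by rewrite mulvA HA mulmx0 mulmx0 mul0rn.
Qed.

Lemma L_kill Z N u (g : R) : Z ^+ N *m u = 0 -> Z *m u = g *: u -> g != 0 -> u = 0.
Proof.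
move=> HN Hz gu.
have P : forall j, Z ^+ j *m u = g ^+ j *: u.
  elim=> [|j IH]; first by rewrite !expr0 mul1mx scale1r.
  by rewrite exprS mulvA IH -scalemxAr Hz scalerA -exprSr.
move: HN; rewrite P => /eqP; rewrite scaler_eq0 => /orP[|/eqP//].
by rewrite expf_eq0 (negbTE gu) andbF.
Qed.
End Lin.

Section Alg.
Variables (R : fieldType) (m : nat).
Implicit Types (P S E X Y : 'M[R]_m).

Lemma algA P S X Y D : D = X - Y -> P*P = P -> P*S = S -> S*P = S -> S*S = P ->
  X*P = P*X -> Y*P = P*Y -> X*Y = Y*X -> S*X - Y*S = -P -> S*Y - X*S = P ->
  [/\ (S*D + P)*X = Y*(S*D + P), (S*D + P)*Y = X*(S*D + P),
      P*(S*D + P) = S*D + P &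
      (S*D + P)*(S*D + P) = P - P*D*D].
Proof.
move=> hD PP PS SP SS XP YP XY R1 R2.
have SX : S*X = Y*S - P by rewrite -[S*X](subrK (Y*S)) R1 addrC.
have YS : Y*S = S*X + P by rewrite SX subrK.
have SY : S*Y = X*S + P by rewrite -[S*Y](subrK (X*S)) R2 addrC.
have XS : X*S = S*Y - P by rewrite SY addrK.
have DX : D*X = X*D by rewrite hD mulrBl mulrBr XY.
have DY : D*Y = Y*D by rewrite hD mulrBl mulrBr XY.
have DP : D*P = P*D by rewrite hD mulrBl mulrBr XP YP.
have DS : D*S = - (S*D) - P - P.
  by rewrite hD mulrBl XS YS mulrBr opprD opprB addrA (addrAC (S*Y)).
split.
- rewrite mulrDl -mulrA DX mulrA SX mulrBl -addrA mulrDr mulrA YP; congr (_ + _).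
  by rewrite addrC -mulrBr hD opprB addrC subrK.
- rewrite mulrDl -mulrA DY mulrA SY mulrDl -addrA mulrDr mulrA XP; congr (_ + _).
  by rewrite -mulrDr hD subrK.
- by rewrite mulrDr mulrA PS PP.
- rewrite mulrDr !mulrDl -!mulrA DP !mulrA PS PP SP.
  rewrite -[S * D * S]mulrA DS !mulrBr !mulrBl mulrN mulNr !mulrA SS SP.
  by rewrite subrK addrA subrK addrC.
Qed.

Lemma algB S E X Y : X*Y = Y*X -> S*X = Y*S + E -> S*Y = X*S - E -> E*(X+Y) = 0 ->
  (S*(X+Y))*X = Y*(S*(X+Y)) /\ (S*(X+Y))*Y = X*(S*(X+Y)).
Proof.
move=> XY SX SY E0.
have DX : (X+Y)*X = X*(X+Y) by rewrite mulrDl mulrDr XY.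
have DY : (X+Y)*Y = Y*(X+Y) by rewrite mulrDl mulrDr XY.
split.
- by rewrite -mulrA DX mulrA SX mulrDl E0 addr0 mulrA.
- by rewrite -mulrA DY mulrA SY mulrBl E0 subr0 mulrA.
Qed.
End Alg.

Section Help.
Variable m : nat.
Implicit Types (A B D X Y : 'M[C]_m) (u w : 'cV[C]_m).

Lemma commS A B c : A*B = B*A -> (A - c%:M)*B = B*(A - c%:M).
Proof. by move=> H; rewrite mulrBl mulrBr H -!mulmxE scalar_mxC. Qed.

Lemma ZD X Y a c : X - a%:M - (Y - c%:M) = (X - Y) - (a - c)%:M.
Proof. by rewrite opprB raddfB /= opprB addrACA [RHS]addrACA (addrC (- Y)). Qed.

Lemma ZS X Y a c : X - a%:M + (Y - c%:M) = (X + Y) - (a + c)%:M.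
Proof. by rewrite raddfD /= opprD addrACA. Qed.

Lemma Zw X Y D w (al c g : C) : D = X - Y -> D *m w = g *: w ->
  ((X - al%:M) - (Y - c%:M)) *m w = (g - al + c) *: w.
Proof.
move=> hD Dw; rewrite ZD -hD mulmxBl Dw mul_scalar_mx -scalerBl.
by congr (_ *: _); ring.
Qed.

Lemma Zu X Y u (al c : C) :
  ((X - al%:M) + (Y - c%:M)) *m u = (X + Y) *m u - (al + c) *: u.
Proof. by rewrite ZS mulmxBl mul_scalar_mx. Qed.

Lemma eig_lin E D N u : E ^+ N *m u = 0 -> E * D = D * E ->
  E ^+ N *m (D *m u - u) = 0.
Proof.
by move=> H c; rewrite mulmxBr H subr0 -mulvA (comm_pow N c) mulvA H mulmx0.
Qed.

Lemma eig_neg E N u : E ^+ N *m u = 0 -> (- E) ^+ N *m u = 0.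
Proof. by move=> H; rewrite exprNn mulvA H mulmx0. Qed.

End Help.

Lemma transport r t m (rho : diag r t -> 'M[C]_m) (y : 'I_(r + t) -> 'M[C]_m)
  (k : 'I_(r + t)) (W : 'M[C]_m) (a b : (r + t).-tuple bool) (i : 'I_(r + t) -> C) v :
  one rho b * W = W -> W * y k = y (succo k) * W -> W * y (succo k) = y k * W ->
  (forall j, j != k -> j != succo k -> W * y j = y j * W) ->
  in_aMi rho y a i v -> in_aMi rho y b (sk_vec k i) (W *m v).
Proof.
move=> QW H1 H2 H3 [[w ->] Hg]; split.
  by exists (W *m (one rho a *m w)); rewrite [RHS]mulmxA mulmxE QW.
move=> j; rewrite /sk_vec /swp.
case: (eqVneq j k) => [->|njk].
  rewrite tpermL; have [N HN] := Hg (succo k); exists N.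
  by rewrite -mulvA (L_pow _ _ H2) mulvA HN mulmx0.
case: (eqVneq j (succo k)) => [->|njs].
  rewrite tpermR; have [N HN] := Hg k; exists N.
  by rewrite -mulvA (L_pow _ _ H1) mulvA HN mulmx0.
rewrite tpermD 1?eq_sym //; have [N HN] := Hg j; exists N.
by rewrite -mulvA (L_pow _ _ (H3 j njk njs)) mulvA HN mulmx0.
Qed.

Unset Implicit Arguments.
Set Strict Implicit.

Theorem lemma3p4 (r t m : nat) (omega : nat -> C)
    (rho : diag r t -> 'M[C]_m) (y : 'I_(r + t) -> 'M[C]_m)
    (a : (r + t).-tuple bool) (i : 'I_(r + t) -> C) (k : 'I_(r + t)) :
  is_VBr_module omega rho y ->
  count id a = r ->
  (k.+1 < r + t)%N ->
  ( (tnth a k = tnth a (succo k) /\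
     i (succo k) <> i k /\ i (succo k) <> i k + 1 /\ i (succo k) <> i k - 1 /\
     (forall v, in_aMi rho y a (sk_vec k i) v -> (y k - (i (succo k))%:M) *m v = 0))
  \/
    (tnth a k <> tnth a (succo k) /\
     i k + i (succo k) <> 0 /\
     (forall v, in_aMi rho y (sk_seq k a) (sk_vec k i) v ->
        (y k - (i (succo k))%:M) *m v = 0)) ) ->
  forall v, in_aMi rho y a i v -> (y (succo k) - (i (succo k))%:M) *m v = 0.
Proof.
move=> HV ca hk Hcase v Hv.
have [Hbr [Hyy [Hyone [Hcomm [_ Hrel]]]]] := HV.
have [Hs Hsh1 Hsh2 He Heh] := Hrel k hk.
have yy : forall p q, y p * y q = y q * y p by move=> p q; rewrite -mulmxE Hyy.
have yP : forall p b, y p * one rho b = one rho b * y p by move=> p b; rewrite -mulmxE Hyone.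
set X := y k; set Y := y (succo k); set al := i k; set c := i (succo k).
set P := one rho a.
have PP : P * P = P by rewrite -mulmxE (oneK HV).
have [[w hw] Hg] := Hv.
have Pv : P *m v = v by rewrite hw mulmxA mulmxE PP.
set u := (Y - c%:M) *m v.
have WY : forall j, (Y - c%:M) * y j = y j * (Y - c%:M) by move=> j; apply: commS; apply: yy.
have XY : X * Y = Y * X := yy _ _.
have XP : X * P = P * X := yP k a.
have YP : Y * P = P * Y := yP (succo k) a.
have Pu : P *m u = u by rewrite /u -mulvA -(commS _ YP) mulvA Pv.
have ueig : forall j, exists N, (y j - (i j)%:M) ^+ N *m u = 0.
  move=> j; have [N HN] := Hg j; exists N.
  by rewrite /u -mulvA (L_pow _ _ (WY j)) mulvA HN mulmx0.
have [N1 HN1] := ueig k.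
have [N2 HN2] := ueig (succo k).
have XYc : X * (Y - c%:M) = (Y - c%:M) * X.
  by symmetry; apply: commS; exact: esym XY.
have AB : (X - al%:M) * (Y - c%:M) = (Y - c%:M) * (X - al%:M) by apply: commS.
case: Hcase => [[eqa [n1 [n2 [n3 Hyp]]]] | [nea [nz Hyp]]].
- have sa : sk_seq k a = a := @sk_fix _ k a eqa.
  pose F := fun b : (r + t).-tuple bool => tnth b k == tnth b (succo k).
  set s := s_ rho k.
  set S := s * P.
  have PS : P * S = S by have := one_G HV F k a; rewrite sa !mulmxE; exact.
  have SP : S * P = S by rewrite /S -mulrA PP.
  have FA : F a by rewrite /F eqa.
  have FsA : F (sk_seq k a) by rewrite sa.
  have SS : S * S = P.
    rewrite {1}/S -mulrA PS.
    by have := GG HV FA FsA ca; rewrite !mulmxE; exact.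
  have [r1 r2] := Hs a eqa; rewrite !mulmxE in r1 r2.
  have R1 : S * X - Y * S = -P by rewrite /S -mulrA -XP !mulrA.
  have R2 : S * Y - X * S = P by rewrite /S -mulrA -YP !mulrA.
  have [PhX PhY PPh PhPh] := algA (erefl (X - Y)) PP PS SP SS XP YP XY R1 R2.
  set Phi := S * (X - Y) + P.
  have HPhi : forall j, j != k -> j != succo k -> Phi * y j = y j * Phi.
    move=> j n1' n2'; have [c1 _ _ _] := Hcomm j k hk n1' n2'.
    have c1' : y j * s = s * y j by rewrite -mulmxE c1.
    rewrite /Phi mulrDl [RHS]mulrDr -(yP j a); congr (_ + _).
    have Sy : S * y j = y j * S by rewrite /S -mulrA -yP mulrA -c1' -mulrA.
    have Dy : (X - Y) * y j = y j * (X - Y) by rewrite mulrBl mulrBr (yy k j) (yy (succo k) j).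
    by rewrite -mulrA Dy mulrA Sy -mulrA.
  have Tv := transport PPh PhX PhY HPhi Hv.
  have HPv := Hyp _ Tv.
  have Phu : Phi *m u = 0.
    have e : Phi * (Y - c%:M) = (X - c%:M) * Phi by rewrite mulrBr mulrBl PhY -!mulmxE scalar_mxC.
    by rewrite /u -mulvA e mulvA HPv.
  have PD : P * (X - Y) = (X - Y) * P by rewrite mulrBl mulrBr XP YP.
  have DDu : (X - Y) *m ((X - Y) *m u) = u.
    have := congr1 (mulmx Phi) Phu; rewrite mulmx0 -mulvA PhPh mulmxBl Pu.
    rewrite PD -mulrA PD !mulvA Pu.
    by move/eqP; rewrite subr_eq0 => /eqP e; rewrite -e.
  set wv := (X - Y) *m u - u.
  have Dw : (X - Y) *m wv = (-1) *: wv by rewrite /wv mulmxBr DDu scaleN1r opprB.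
  have XD : X * (X - Y) = (X - Y) * X by rewrite mulrBr mulrBl XY.
  have YD : Y * (X - Y) = (X - Y) * Y by rewrite mulrBr mulrBl XY.
  have weigX : (X - al%:M) ^+ N1 *m wv = 0 by apply: eig_lin => //; apply: commS.
  have weigY : (- (Y - c%:M)) ^+ N2 *m wv = 0 by apply: eig_neg; apply: eig_lin => //; apply: commS.
  have AB' : (X - al%:M) * (- (Y - c%:M)) = (- (Y - c%:M)) * (X - al%:M) by rewrite mulrN mulNr AB.
  have g1 : -1 - al + c != 0.
    apply/eqP => H; apply: n2; apply/eqP; rewrite -subr_eq0 -H /al /c; apply/eqP; ring.
  have g2 : 1 - al + c != 0.
    apply/eqP => H; apply: n3; apply/eqP; rewrite -subr_eq0 -H /al /c; apply/eqP; ring.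
  have w0 : wv = 0.
    apply: (L_kill (Z := (X - al%:M) + - (Y - c%:M)) (N := (N1 + N2)%N) (g := -1 - al + c)) => //.
    - exact: L_nil AB' weigX weigY.
    - exact: Zw (erefl _) Dw.
  have Du : (X - Y) *m u = 1 *: u.
    by rewrite scale1r; apply/eqP; rewrite -subr_eq0; apply/eqP; exact: w0.
  apply: (L_kill (Z := (X - al%:M) + - (Y - c%:M)) (N := (N1 + N2)%N) (g := 1 - al + c)) => //.
  + exact: L_nil AB' HN1 (eig_neg HN2).
  + exact: Zw (erefl _) Du.
- pose F := fun b : (r + t).-tuple bool => tnth b k != tnth b (succo k).
  set sh := sh_ rho k in Hsh1 Hsh2 *; set eh := eh_ rho k in Hsh1 Hsh2 Heh *.
  have FA : F a by rewrite /F; apply/eqP.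
  have FsA : F (sk_seq k a).
    by rewrite /F (@sk_k _ k a).1 (@sk_k _ k a).2 eq_sym.
  set S := sh * P; set E := eh * P.
  have QS : one rho (sk_seq k a) * S = S by have := one_G HV F k a; rewrite !mulmxE; exact.
  have shS : sh * S = P by have := GG HV FA FsA ca; rewrite !mulmxE; exact.
  rewrite !mulmxE in Hsh1 Hsh2.
  have sh1 : sh * X = Y * sh + eh by rewrite -Hsh1 addrC subrK.
  have sh2 : sh * Y = X * sh - eh by rewrite -Hsh2 addrC subrK.
  have SX : S * X = Y * S + E by rewrite /S /E -mulrA -XP mulrA sh1 mulrDl mulrA.
  have SY : S * Y = X * S - E by rewrite /S /E -mulrA -YP mulrA sh2 mulrBl mulrA.
  have PXY : P * (X + Y) = (X + Y) * P by rewrite mulrDl mulrDr XP YP.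
  have E0 : E * (X + Y) = 0.
    have [_ eh0] := Heh; rewrite mulmxE in eh0.
    by rewrite /E -mulrA PXY mulrA eh0 mul0r.
  have [PhX PhY] := algB XY SX SY E0.
  set Phi := S * (X + Y).
  have QPh : one rho (sk_seq k a) * Phi = Phi by rewrite /Phi mulrA QS.
  have HPhi : forall j, j != k -> j != succo k -> Phi * y j = y j * Phi.
    move=> j n1' n2'; have [_ c1 _ _] := Hcomm j k hk n1' n2'.
    have c1' : y j * sh = sh * y j by rewrite -mulmxE c1.
    have Sy : S * y j = y j * S by rewrite /S -mulrA -yP mulrA -c1' -mulrA.
    have Dy : (X + Y) * y j = y j * (X + Y) by rewrite mulrDl mulrDr (yy k j) (yy (succo k) j).
    by rewrite /Phi -mulrA Dy mulrA Sy -mulrA.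
  have Tv := transport QPh PhX PhY HPhi Hv.
  have HPv := Hyp _ Tv.
  have Phu : Phi *m u = 0.
    have e : Phi * (Y - c%:M) = (X - c%:M) * Phi by rewrite mulrBr mulrBl PhY -!mulmxE scalar_mxC.
    by rewrite /u -mulvA e mulvA HPv.
  have XYu : (X + Y) *m u = 0.
    have := congr1 (mulmx sh) Phu; rewrite mulmx0 -mulvA /Phi mulrA shS PXY mulvA Pu.
    exact.
  have g : - (al + c) != 0 by rewrite oppr_eq0; apply/eqP.
  apply: (L_kill (Z := (X - al%:M) + (Y - c%:M)) (N := (N1 + N2)%N) (g := - (al + c))) => //.
  + exact: L_nil AB HN1 HN2.
  + by rewrite Zu XYu sub0r scaleNr.
Qed.
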